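(* For every graph $G$ and every minor-3-core $C$ of $G$, there is a minor-3-core of $G$ isomorphic to $C$ in which every vertex has the disjoint-paths property.
   Context: Graphs are simple and undirected. Contracting a vertex $u$ to a neighbour $v$ produces the graph with vertex set $V\setminus\{u\}$ and edge set consisting of all edges of $G$ not incident to $u$ together with all edges $\{u',v\}$ with $u'\neq v$ and $\{u',u\}\in E$. A minor of $G$ is a graph obtained from $G$ by vertex contractions and subgraph operations; thus the vertices of a minor are (non-contracted) vertices of $G$. A minor-3-core of $G$ is a minor $H$ of $G$ with minimum degree at least $3$ such that no minor of $G$ with minimum degree at least $3$ has more edges than $H$. For a minor-3-core $C$ of $G$, a vertex $v$ of $C$ has the disjoint-paths property for $C$ if, letting $u_1,\dots,u_{\Delta_C(v)}$ be the neighbours of $v$ in $C$, there are paths $\gamma_i$ in $G$ from $v$ to $u_i$ such that any two distinct paths $\gamma_i,\gamma_j$ share only the vertex $v$. *)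

(* Defs.v *)
From mathcomp Require Import all_boot.
Set Implicit Arguments. Unset Strict Implicit. Unset Printing Implicit Defensive.

(* A graph whose vertex set is a subset of T; edges are 2-element subsets. *)
Record sgraph (T : finType) := SGraph { sv : {set T}; se : {set {set T}} }.

Section Graphs.
Variable T : finType.

Definition graph_of (e : rel T) : sgraph T :=
  SGraph [set: T] [set [set x; y] | x in T, y in T & e x y].

Definition contract (G : sgraph T) (u v : T) : sgraph T :=
  SGraph (sv G :\ u)
    ([set f in se G | u \notin f]
       :|: [set [set u'; v] | u' in sv G & ([set u'; u] \in se G) && (u' != v)]).

Inductive minor_step (G H : sgraph T) : Prop :=
  | step_contract u v :
      u \in sv G -> v \in sv G -> [set u; v] \in se G ->
      H = contract G u v -> minor_step G H
  | step_subgraph :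
      sv H \subset sv G -> se H \subset se G ->
      (forall f, f \in se H -> f \subset sv H) -> minor_step G H.

Inductive is_minor (G : sgraph T) : sgraph T -> Prop :=
  | minor_refl : is_minor G G
  | minor_trans H K : is_minor G H -> minor_step H K -> is_minor G K.

Definition deg (H : sgraph T) (v : T) : nat := #|[set f in se H | v \in f]|.

Definition mindeg3 (H : sgraph T) : Prop :=
  forall v, v \in sv H -> 3 <= deg H v.

Definition minor3core (e : rel T) (C : sgraph T) : Prop :=
  [/\ is_minor (graph_of e) C, mindeg3 C &
      forall H, is_minor (graph_of e) H -> mindeg3 H -> #|se H| <= #|se C| ].

Definition sg_iso (C H : sgraph T) : Prop :=
  exists f : T -> T,
    [/\ {in sv C &, injective f}, f @: sv C = sv H &
        se H = [set f @: (x : {set T}) | x : {set T} in se C] ].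

Definition disjoint_paths_prop (e : rel T) (C : sgraph T) (v : T) : Prop :=
  exists p : T -> seq T,
    (forall u, [set v; u] \in se C ->
       [/\ path e v (p u), last v (p u) = u & uniq (v :: p u)]) /\
    (forall u u', [set v; u] \in se C -> [set v; u'] \in se C -> u != u' ->
       [disjoint p u & p u']).

End Graphs.

(* Main.v *)
Require Import Defs.
From mathcomp Require Import all_boot zify.
From Stdlib Require Import IndefiniteDescription.
Set Implicit Arguments. Unset Strict Implicit. Unset Printing Implicit Defensive.

Lemma fchoice (A B : Type) (P : A -> B -> Prop) :
  (forall a, exists b, P a b) -> exists f : A -> B, forall a, P a (f a).
Proof.
move=> H; exists (fun a => proj1_sig (constructive_indefinite_description _ (H a))).
by move=> a; case: (constructive_indefinite_description _ (H a)).
Qed.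

Section Main.
Variable T : finType.
Variable e : rel T.
Hypothesis esym : symmetric e.
Hypothesis eirr : irreflexive e.
Notation G := (graph_of e).

Lemma seG a b : ([set a; b] \in se G) = e a b.
Proof.
apply/idP/idP.
- case/imset2P => x y _; rewrite inE => /andP [_ exy] E.
  have ha : a \in [set x; y] by rewrite -E set21.
  have hb : b \in [set x; y] by rewrite -E set22.
  have hx : x \in [set a; b] by rewrite E set21.
  have hy : y \in [set a; b] by rewrite E set22.
  have xy : x != y by apply: contraTneq exy => ->; rewrite eirr.
  case/set2P: ha => ea; case/set2P: hb => eb; subst.
  + by move: hy; rewrite in_set2 orbb eq_sym (negbTE xy).
  + by [].
  + by rewrite esym.
  + by move: hx; rewrite in_set2 orbb (negbTE xy).
- move=> eab; apply/imset2P; exists a b => //; by rewrite inE eab.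
Qed.

Definition conn (K : sgraph T) (Z : {set T}) :=
  forall S : {set T}, S \subset Z -> S != set0 -> S != Z ->
  exists a b, [/\ a \in S, b \in Z :\: S & [set a; b] \in se K].

Lemma tree_conn (Z : {set T}) (r : T) (g : T -> T) (hh : T -> nat) :
  r \in Z ->
  (forall w, w \in Z -> w != r -> [/\ g w \in Z, e w (g w) & hh (g w) < hh w]) ->
  conn G Z.
Proof.
move=> rZ Hg S sSZ Sn0 SnZ.
case: (boolP (r \in S)) => rS.
- have [w0 w0Z w0S] : exists2 w, w \in Z & w \notin S.
    apply/exists_inP; move: SnZ; apply: contraR; rewrite negb_exists_in.
    move=> /forall_inP H; rewrite eqEsubset sSZ /=; apply/subsetP => w wZ.
    by have := H w wZ; rewrite negbK.
  have P0 : (w0 \in Z) && (w0 \notin S) by rewrite w0Z.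
  case: (@arg_minnP _ w0 (fun w => (w \in Z) && (w \notin S)) hh P0) => w /andP [wZ wS] Hmin.
  have wr : w != r by apply: contraNneq wS => ->.
  case: (Hg w wZ wr) => gZ ew hlt.
  case: (boolP (g w \in S)) => gS.
  + exists (g w), w; split => //; first by rewrite inE wS.
    by rewrite seG esym.
  + by have := Hmin (g w); rewrite gZ gS /= => /(_ isT); rewrite leqNgt hlt.
- case/set0Pn: Sn0 => w0 w0S.
  case: (@arg_minnP _ w0 (fun w => w \in S) hh w0S) => w wS Hmin.
  have wZ : w \in Z by apply: (subsetP sSZ).
  have wr : w != r by apply: contraNneq rS => <-.
  case: (Hg w wZ wr) => gZ ew hlt.
  case: (boolP (g w \in S)) => gS.
  + by have := Hmin (g w) gS; rewrite leqNgt hlt.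
  + exists w, (g w); split => //; first by rewrite inE gS.
    by rewrite seG.
Qed.

Lemma conn_tree (Z : {set T}) (r : T) : conn G Z -> r \in Z ->
  exists (g : T -> T) (hh : T -> nat), g r = r /\
  (forall w, w \in Z -> w != r -> [/\ g w \in Z, e w (g w) & hh (g w) < hh w]).
Proof.
move=> cZ rZ.
suff H : forall n (S : {set T}), #|Z :\: S| <= n -> r \in S -> S \subset Z ->
  (exists (g : T -> T) (hh : T -> nat), g r = r /\
  (forall w, w \in S -> w != r -> [/\ g w \in S, e w (g w) & hh (g w) < hh w])) ->
  exists (g : T -> T) (hh : T -> nat), g r = r /\
  (forall w, w \in Z -> w != r -> [/\ g w \in Z, e w (g w) & hh (g w) < hh w]).
  apply: (H #|Z|) (set1 r) _ _ _ _.
  - by apply: subset_leq_card; apply: subsetDl.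
  - by rewrite set11.
  - by rewrite sub1set.
  - exists id, (fun _ => 0); split => // w; rewrite inE => /eqP ->; by rewrite eqxx.
elim=> [|n IH] S hn rS sSZ [g [hh [gr Hg]]].
- have SZ : S = Z.
    apply/eqP; rewrite eqEsubset sSZ /=; apply/subsetP => w wZ.
    move: hn; rewrite leqn0 cards_eq0 => /eqP /setP /(_ w); rewrite !inE wZ andbT.
    by move/negbFE.
  by exists g, hh; rewrite -SZ.
case: (eqVneq S Z) => [SZ|SnZ]; first by exists g, hh; rewrite -SZ.
have Sn0 : S != set0 by apply/set0Pn; exists r.
case: (cZ S sSZ Sn0 SnZ) => a [b [aS]]; rewrite inE => /andP [bS bZ].
rewrite seG => eab.
have ba : b != a by apply: contraNneq bS => ->.
have br : b != r by apply: contraNneq bS => ->.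
apply: (IH (b |: S)).
- have lt : #|Z :\: (b |: S)| < #|Z :\: S|.
    apply: proper_card; apply/properP; split.
    + apply/subsetP => w; rewrite !inE => /andP [/norP [_ ->] ->]; by [].
    + by exists b; rewrite !inE ?eqxx ?bS ?bZ.
  by rewrite -ltnS; exact: leq_trans lt hn.
- by rewrite in_setU1 rS orbT.
- by rewrite subUset sub1set bZ sSZ.
exists (fun w => if w == b then a else g w), (fun w => if w == b then (hh a).+1 else hh w).
split; first by rewrite eq_sym (negbTE br).
move=> w; rewrite in_setU1 => /orP [/eqP ->|wS] wr.
- rewrite eqxx eq_sym (negbTE ba); split => //; first by rewrite in_setU1 aS orbT.
  by rewrite esym.
- have wb : w != b by apply: contraNneq bS => <-.
  rewrite (negbTE wb); case: (Hg w wS wr) => gS ew hlt.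
  have gb : g w != b by apply: contraNneq bS => <-.
  by rewrite (negbTE gb) in_setU1 gS orbT.
Qed.

Lemma path_in (Z : {set T}) t p :
  path (fun a b => e a b && (b \in Z)) t p -> {subset p <= Z}.
Proof.
elim: p t => [|c p IH] t //= /andP [/andP [_ cZ] pp] w.
rewrite inE => /orP [/eqP -> //|wp].
exact: (IH c pp w wp).
Qed.

Lemma conn_path (Z : {set T}) t w : conn G Z -> t \in Z -> w \in Z ->
  exists p, [/\ path e t p, last t p = w, uniq (t :: p) & {subset p <= Z}].
Proof.
move=> cZ tZ wZ.
pose eZ := (fun a b => e a b && (b \in Z)).
have C : connect eZ t w.
  pose R := [set v in Z | connect eZ t v].
  case: (eqVneq R Z) => [RZ|RnZ]; first by move: wZ; rewrite -RZ inE => /andP [].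
  have sRZ : R \subset Z by apply/subsetP => v; rewrite inE => /andP [].
  have Rn0 : R != set0 by apply/set0Pn; exists t; rewrite inE tZ connect0.
  case: (cZ R sRZ Rn0 RnZ) => a [b [aR]]; rewrite inE seG => /andP [bR bZ] eab.
  move: bR; rewrite inE bZ /=; move: aR; rewrite inE => /andP [_ ca].
  by rewrite (connect_trans ca) // connect1 // /eZ eab bZ.
case/connectP: C => p pp ->.
case: (shortenP pp) => p' pp' up' _.
exists p'; split => //; last exact: path_in pp'.
by apply: sub_path pp' => a b /andP [].
Qed.


Lemma mem_contract1 (K : sgraph T) u v f :
  f \in se K -> u \notin f -> f \in se (contract K u v).
Proof. by move=> fK uf; rewrite /contract /= in_setU inE fK uf. Qed.

Lemma mem_contract2 (K : sgraph T) u v u' :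
  u' \in sv K -> [set u'; u] \in se K -> u' != v ->
  [set u'; v] \in se (contract K u v).
Proof.
move=> u'K eK u'v; rewrite /contract /= in_setU; apply/orP; right.
by apply: imset_f; rewrite inE u'K eK u'v.
Qed.

Lemma conn_contract (K : sgraph T) (Z : {set T}) u v :
  conn K Z -> Z \subset sv K -> (u \in Z -> v \in Z /\ u != v) ->
  conn (contract K u v) (Z :\ u).
Proof.
move=> cZ0 sZK Huv S sSZ Sn0 SnZ.
have uS : u \notin S by apply/negP => /(subsetP sSZ); rewrite !inE eqxx.
have sSZ' : S \subset Z by apply: subset_trans sSZ (subsetDl _ _).
case: (boolP (u \in Z)) => uZ; last first.
  have ZuZ : Z :\ u = Z by apply/setDidPl; rewrite disjoint_sym disjoints1.
  rewrite ZuZ in SnZ *.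
  case: (cZ0 S sSZ' Sn0 SnZ) => a [c [aS cZS ac]].
  exists a, c; split => //; apply: mem_contract1 => //.
  rewrite in_set2 negb_or; apply/andP; split.
  + by apply: contraNneq uS => ->.
  + by apply: contraNneq uZ => ->; move: cZS; rewrite inE => /andP [].
case: (Huv uZ) => vZ uv.
case: (boolP (v \in S)) => vS.
- have [w0 w0Z w0S] : exists2 w, w \in Z :\ u & w \notin S.
    apply/exists_inP; move: SnZ; apply: contraR; rewrite negb_exists_in.
    move=> /forall_inP H; rewrite eqEsubset sSZ /=; apply/subsetP => w wZ.
    by have := H w wZ; rewrite negbK.
  have s1 : u |: S \subset Z by rewrite subUset sub1set uZ sSZ'.
  have s2 : u |: S != set0 by apply/set0Pn; exists u; rewrite in_setU1 eqxx.
  have s3 : u |: S != Z.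
    apply/eqP => E; move: w0Z; rewrite -E !inE; case/andP => /negbTE -> /=.
    by rewrite (negbTE w0S).
  case: (cZ0 _ s1 s2 s3) => a [c [aS cZS ac]].
  move: cZS; rewrite !inE negb_or => /andP [/andP [cu cS] cZ].
  move: aS; rewrite in_setU1 => /orP [/eqP au|aS].
  + exists v, c; split => //; first by rewrite !inE cS cu cZ.
    rewrite setUC; apply: mem_contract2.
    * by apply: (subsetP sZK).
    * by rewrite setUC -au.
    * by apply: contraNneq cS => ->.
  + exists a, c; split => //; first by rewrite !inE cS cu cZ.
    apply: mem_contract1 => //; rewrite in_set2 negb_or (eq_sym u c) cu andbT.
    by apply: contraNneq uS => ->.
- have SnZ' : S != Z by apply: contraNneq vS => ->.
  case: (cZ0 S sSZ' Sn0 SnZ') => a [c [aS cZS ac]].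
  have au : a != u by apply: contraNneq uS => <-.
  move: cZS; rewrite inE => /andP [cS cZ].
  case: (eqVneq c u) => [cu|cu].
  + exists a, v; split => //; first by rewrite !inE vS vZ eq_sym uv.
    apply: mem_contract2.
    * by apply: (subsetP sZK); apply: (subsetP sSZ').
    * by rewrite -cu.
    * by apply: contraNneq vS => <-.
  + exists a, c; split => //; first by rewrite !inE cS cu cZ.
    apply: mem_contract1 => //; rewrite in_set2 negb_or eq_sym au /=.
    by rewrite eq_sym.
Qed.

Definition branch (U : {set T}) (b : T -> T) x := [set w in U | b w == x].

Definition model (K H : sgraph T) (U : {set T}) (b : T -> T) : Prop :=
 [/\ U \subset sv K,
     forall w, w \in U -> b w \in sv H,
     forall x, x \in sv H -> x \in U /\ b x = x,
     forall x, x \in sv H -> conn K (branch U b x) &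
     forall f, f \in se H -> exists a c,
        [/\ a \in U, c \in U, b a != b c, [set a; c] \in se K & f = [set b a; b c]] ].

Lemma base_minor K H (U : {set T}) (b : T -> T) : is_minor G K -> model K H U b ->
  (forall w, w \in U -> b w = w) -> is_minor G H.
Proof.
move=> mK [sUK rng lab cn edg] id; apply: (minor_trans mK); apply: step_subgraph.
- apply/subsetP => x xH; apply: (subsetP sUK); by case: (lab x xH).
- apply/subsetP => f /edg [a [c [aU cU _ acK ->]]]; by rewrite !id.
- move=> f /edg [a [c [aU cU _ _ ->]]].
  by rewrite subUset !sub1set !rng.
Qed.

Lemma model_minor n K H (U : {set T}) (b : T -> T) : #|U| <= n -> is_minor G K -> model K H U b -> is_minor G H.
Proof.
elim: n K U => [|n IH] K U hn mK M.
  apply: (base_minor mK M) => w wU; move: hn; rewrite leqn0 cards_eq0 => /eqP U0.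
  by move: wU; rewrite U0 inE.
case: (boolP [exists w in U, b w != w]); last first.
  rewrite negb_exists_in => /forall_inP H0.
  by apply: (base_minor mK M) => w /H0; rewrite negbK => /eqP.
case/exists_inP => w wU bw.
case: M => [sUK rng lab cn edg].
set x := b w.
have xH : x \in sv H by apply: rng.
have [xU bx] := lab x xH.
have s1 : [set w] \subset branch U b x by rewrite sub1set inE wU eqxx.
have s2 : [set w] != set0 by apply/set0Pn; exists w; rewrite set11.
have s3 : [set w] != branch U b x.
  apply/eqP => E; have : x \in branch U b x by rewrite inE xU bx eqxx.
  by rewrite -E inE /x (negbTE bw).
case: (cn x xH _ s1 s2 s3) => a [p [aw]].
move: aw; rewrite inE => /eqP ->.
clear a.
rewrite !inE => /andP [pw /andP [pU /eqP bp]] wpK.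
have wK : w \in sv K by apply: (subsetP sUK).
have pK : p \in sv K by apply: (subsetP sUK).
have mK' : is_minor G (contract K w p).
  by apply: (minor_trans mK); apply: (step_contract wK pK wpK).
apply: (IH (contract K w p) (U :\ w)) => //.
  by move: hn; rewrite (cardsD1 w U) wU.
have brE : forall y, branch (U :\ w) b y = branch U b y :\ w.
  by move=> y; apply/setP => z; rewrite !inE andbA [(z != w) && _]andbC.
split.
- by apply: setSD.
- by move=> z; rewrite inE => /andP [_ /rng].
- move=> y yH; have [yU byy] := lab y yH; split => //.
  rewrite !inE yU andbT; apply: contraNneq bw => <-; by rewrite byy.
- move=> y yH; rewrite brE; apply: conn_contract.
  + exact: cn.
  + by apply: subset_trans sUK; apply/subsetP => z; rewrite inE => /andP [].
  + rewrite inE => /andP [_ /eqP bwy]; split; first by rewrite inE pU bp /x bwy eqxx.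
    by rewrite eq_sym.
- move=> f /edg [a [c [aU cU bac acK fE]]].
  case: (eqVneq a w) => [aw|aw].
  + subst a.
    have cw : c != w by apply: contraNneq bac => ->.
    exists p, c; split => //.
    * by rewrite !inE pU pw.
    * by rewrite !inE cU cw.
    * by rewrite bp.
    * rewrite setUC; apply: mem_contract2 => //.
      - by apply: (subsetP sUK).
      - by rewrite setUC.
      - by apply: contraNneq bac => ->; rewrite bp.
    * by rewrite fE bp.
  case: (eqVneq c w) => [cw|cw].
  + subst c.
    exists a, p; split => //.
    * by rewrite !inE aU aw.
    * by rewrite !inE pU pw.
    * by rewrite bp.
    * apply: mem_contract2 => //.
      - by apply: (subsetP sUK).
      - by apply: contraNneq bac => ->; rewrite bp.
    * by rewrite fE bp.
  + exists a, c; split => //.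
    * by rewrite !inE aU aw.
    * by rewrite !inE cU cw.
    * by apply: mem_contract1 => //; rewrite in_set2 negb_or !(eq_sym w) aw cw.
Qed.

Lemma set2_eq (p q r s : T) : [set p; q] = [set r; s] ->
  (p = r /\ q = s) \/ (p = s /\ q = r).
Proof.
move=> E.
have hp : p \in [set r; s] by rewrite -E set21.
have hq : q \in [set r; s] by rewrite -E set22.
have hr : r \in [set p; q] by rewrite E set21.
have hs : s \in [set p; q] by rewrite E set22.
case/set2P: hp => ep; case/set2P: hq => eq; subst; auto.
- by move/set2P: hs => [] ->; auto.
- by move/set2P: hr => [] ->; auto.
Qed.

Lemma conn_glue (K : sgraph T) X Y a c : conn K X -> conn K Y ->
  a \in X -> c \in Y -> [set a; c] \in se K -> conn K (X :|: Y).
Proof.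
move=> cX cY aX cY' acK S sS Sn0 SnXY.
have gen : forall Z, conn K Z -> Z \subset X :|: Y -> S :&: Z != set0 -> S :&: Z != Z ->
    exists a0 b0, [/\ a0 \in S, b0 \in (X :|: Y) :\: S & [set a0; b0] \in se K].
  move=> Z cZ sZ h1 h2; case: (cZ (S :&: Z) (subsetIr _ _) h1 h2) => a0 [b0 [a0S b0Z E]].
  exists a0, b0; split => //; first by move: a0S; rewrite inE => /andP [].
  move: b0Z; rewrite !inE negb_and => /andP [/orP [b0S|b0Z] b0Z'].
  + by rewrite b0S; move: (subsetP sZ b0 b0Z'); rewrite inE => ->.
  + by rewrite b0Z' in b0Z.
have sX : X \subset X :|: Y by apply: subsetUl.
have sY : Y \subset X :|: Y by apply: subsetUr.
have neq : forall (Z : {set T}) w, w \in Z -> w \notin S -> S :&: Z != Z.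
  by move=> Z w wZ wS; apply/eqP => E; move: wZ; rewrite -E inE (negbTE wS).
have nz : forall (Z : {set T}) w, w \in Z -> w \in S -> S :&: Z != set0.
  by move=> Z w wZ wS; apply/set0Pn; exists w; rewrite inE wS.
case: (boolP (a \in S)) => aS; case: (boolP (c \in S)) => cS.
- have [w wXY wS] : exists2 w, w \in X :|: Y & w \notin S.
    apply/exists_inP; move: SnXY; apply: contraR; rewrite negb_exists_in.
    move=> /forall_inP H; rewrite eqEsubset sS /=; apply/subsetP => w wZ.
    by have := H w wZ; rewrite negbK.
  move: wXY; rewrite inE => /orP [wX|wY].
  + by apply: (gen X cX sX); [apply: (nz X a)| apply: (neq X w)].
  + by apply: (gen Y cY sY); [apply: (nz Y c)| apply: (neq Y w)].
- exists a, c; split => //; by rewrite inE cS (subsetP sY).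
- exists c, a; split => //; first by rewrite inE aS (subsetP sX).
  by rewrite setUC.
- case/set0Pn: Sn0 => w wS.
  move: (subsetP sS w wS); rewrite inE => /orP [wX|wY].
  + by apply: (gen X cX sX); [apply: (nz X w)| apply: (neq X a)].
  + by apply: (gen Y cY sY); [apply: (nz Y w)| apply: (neq Y c)].
Qed.


Lemma minor_model H : is_minor G H -> exists U b, model G H U b.
Proof.
elim=> [|H1 H2 _ [U [b [sUK rng lab cn edg]]] st].
- exists setT, id; split => //.
  + move=> x _; rewrite /branch.
    have -> : [set w in [set: T] | id w == x] = [set x] by apply/setP => w; rewrite !inE.
    move=> S sS Sn0 SnX; exfalso; move: SnX; rewrite eqEsubset sS /=.
    case/set0Pn: Sn0 => w wS; move: (subsetP sS w wS); rewrite inE => /eqP wx.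
    by rewrite sub1set -wx wS.
  + move=> f /imset2P [x y _]; rewrite inE => /andP [_ exy] ->.
    exists x, y; split => //; last by rewrite seG.
    by apply: contraTneq exy => ->; rewrite eirr.
case: st => [u v uH vH uvH ->|svs ses sin].
- have [a0 [c0 [a0U c0U bac0 ac0K E0]]] := edg _ uvH.
  have uv : u != v.
    apply: contraNneq bac0 => uv; move: E0; rewrite -uv => /set2_eq.
    by case=> [[<- <-]|[<- <-]].
  pose b' := fun w => if b w == u then v else b w.
  have b'E : forall w, b w != u -> b' w = b w by move=> w /negbTE; rewrite /b' => ->.
  exists U, b'; split => //.
  + move=> w wU; rewrite /b' /=; case: eqP => [_|/eqP bu]; rewrite !inE.
    * by rewrite eq_sym uv vH.
    * by rewrite bu rng.
  + move=> x; rewrite /= !inE => /andP [xu xH]; have [xU bx] := lab x xH.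
    by split => //; rewrite b'E bx.
  + move=> x; rewrite /= !inE => /andP [xu xH].
    case: (eqVneq x v) => [xv|xv].
    * have -> : branch U b' x = branch U b u :|: branch U b v.
        apply/setP => w; rewrite /branch !inE /b' xv.
        case: (w \in U) => //=; case: (eqVneq (b w) u) => [->|] /=; rewrite ?eqxx // => bwu; by rewrite (negbTE bwu).
      case/set2_eq: E0 => [[e1 e2]|[e1 e2]].
      - apply: (conn_glue (a := a0) (c := c0)) => //; try exact: cn.
        + by rewrite inE a0U e1 eqxx.
        + by rewrite inE c0U e2 eqxx.
      - apply: (conn_glue (a := c0) (c := a0)) => //; try exact: cn.
        + by rewrite inE c0U e1 eqxx.
        + by rewrite inE a0U e2 eqxx.
        + by rewrite setUC.
    * have -> : branch U b' x = branch U b x.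
        apply/setP => w; rewrite /branch !inE /b'.
        case: (w \in U) => //=; case: (eqVneq (b w) u) => [->|] //=.
        by rewrite eq_sym (negbTE xv) eq_sym (negbTE xu).
      exact: cn.
  + move=> f; rewrite /contract /= in_setU => /orP [|].
    * rewrite inE => /andP [/edg [a [c [aU cU bac acK fE]]] uf].
      have bau : b a != u by apply: contraNneq uf => <-; rewrite fE set21.
      have bcu : b c != u by apply: contraNneq uf => <-; rewrite fE set22.
      by exists a, c; rewrite !b'E.
    * case/imsetP => u' ; rewrite inE => /andP [u'H /andP [u'uH u'v]] ->.
      have [a [c [aU cU bac acK fE]]] := edg _ u'uH.
      case/set2_eq: fE => [[e1 e2]|[e1 e2]].
      - have bau : b a != u by rewrite e2.
        exists a, c; split => //.
        + by rewrite b'E // /b' -e2 eqxx -e1.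
        + by rewrite b'E // -e1 /b' -e2 eqxx.
      - have bcu : b c != u by rewrite e2 eq_sym.
        exists c, a; split => //.
        + by rewrite b'E // /b' -e2 eqxx -e1.
        + by rewrite setUC.
        + by rewrite b'E // -e1 /b' -e2 eqxx.
- exists [set w in U | b w \in sv H2], b; split.
  + by apply/subsetP => w; rewrite inE.
  + by move=> w; rewrite inE => /andP [].
  + move=> x xH2; have [xU bx] := lab x (subsetP svs x xH2).
    by rewrite inE xU bx xH2.
  + move=> x xH2; have -> : branch [set w in U | b w \in sv H2] b x = branch U b x.
      apply/setP => w; rewrite /branch !inE.
      by case: eqP => [->|_]; rewrite ?andbF ?andbT // xH2 andbT.
    exact: cn (subsetP svs x xH2).
  + move=> f fH2; have [a [c [aU cU bac acK fE]]] := edg _ (subsetP ses f fH2).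
    have sf := sin f fH2.
    exists a, c; split => //; rewrite inE ?aU ?cU /=; apply: (subsetP sf); rewrite fE.
    * by rewrite set21.
    * by rewrite set22.
Qed.

End Main.

Lemma card_disjU (X : finType) (A B : {set X}) :
  [disjoint A & B] -> #|A :|: B| = #|A| + #|B|.
Proof. by move=> d; apply/eqP; rewrite (leq_card_setU A B).2. Qed.

Lemma disj_by (X : finType) (A B : {set X}) (P : pred X) :
  (forall f, f \in A -> P f) -> (forall f, f \in B -> ~~ P f) -> [disjoint A & B].
Proof.
move=> H1 H2; rewrite -setI_eq0; apply/eqP/setP => f; rewrite !inE.
apply/negP => /andP [fa fb]; by have := H1 f fa; rewrite (negbTE (H2 f fb)).
Qed.

Lemma set2_inj (X : finType) (p y y' : X) : y != p -> [set p; y] = [set p; y'] -> y = y'.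
Proof.
move=> yp E.
have : y \in [set p; y'] by rewrite -E set22.
by rewrite in_set2 (negbTE yp) => /eqP.
Qed.

Lemma arith a b c d s : a + (b + (c + 1)) <= s -> s <= a + d -> d <= c + b -> False.
Proof. lia. Qed.

Lemma disj_seq (T : finType) (s s' : seq T) (P : pred T) :
  {subset s <= P} -> (forall w, w \in s' -> w \notin P) -> [disjoint s & s'].
Proof.
move=> H1 H2; rewrite disjoint_has; apply/hasPn => w ws; apply/negP => ws'.
by have := H2 w ws'; rewrite (H1 w ws).
Qed.

Lemma two_le (T : finType) (Z : {set T}) y y' : y \in Z -> y' \in Z -> y != y' -> 2 <= #|Z|.
Proof.
move=> yZ y'Z yy'; have := cards2 y y'; rewrite yy' => <-.
by apply: subset_leq_card; rewrite subUset !sub1set yZ y'Z.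
Qed.

Lemma disjS (T : finType) (A B : {set T}) v : [disjoint A & B] -> v \in A -> v \in B -> False.
Proof.
rewrite -setI_eq0 => /eqP /setP /(_ v); rewrite in_setI in_set0 => E vA vB.
by rewrite vA vB in E.
Qed.

Section Core.
Variable T : finType.
Variable e : rel T.
Hypothesis esym : symmetric e.
Hypothesis eirr : irreflexive e.
Notation G := (graph_of e).
Variables (C : sgraph T) (U : {set T}) (b : T -> T).
Hypothesis MC : model G C U b.
Hypothesis mdC : mindeg3 C.
Hypothesis maxC : forall H, is_minor G H -> mindeg3 H -> #|se H| <= #|se C|.

Let seGE := seG esym eirr.

Definition Nb x := [set y in sv C | [set x; y] \in se C].
Definition sees x (Z : {set T}) :=
  [set y in Nb x | [exists w in Z, exists z in branch U b y, e w z]].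

Lemma rngC w : w \in U -> b w \in sv C.
Proof. by case: MC => _ r _ _ _; apply: r. Qed.
Lemma labC x : x \in sv C -> x \in U /\ b x = x.
Proof. by case: MC => _ _ l _ _; apply: l. Qed.
Lemma connC x : x \in sv C -> conn G (branch U b x).
Proof. by case: MC => _ _ _ c _; apply: c. Qed.
Lemma edgC f : f \in se C -> exists a c,
   [/\ a \in U, c \in U, b a != b c, [set a; c] \in se G & f = [set b a; b c]].
Proof. by case: MC => _ _ _ _ ed; apply: ed. Qed.

Lemma inbr w y : w \in branch U b y -> w \in U /\ b w = y.
Proof. by rewrite inE => /andP [? /eqP]. Qed.

Lemma edge_ends f : f \in se C -> exists x y, [/\ x \in sv C, y \in sv C, x != y & f = [set x; y]].
Proof. by move/edgC => [a [c [aU cU bac _ ->]]]; exists (b a), (b c); rewrite !rngC. Qed.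

Lemma edge_sub f : f \in se C -> f \subset sv C.
Proof. by move/edge_ends => [x [y [xC yC _ ->]]]; rewrite subUset !sub1set xC yC. Qed.

Lemma N_neq x y : y \in Nb x -> y != x.
Proof.
rewrite inE => /andP [_ /edge_ends [p [q [_ _ pq E]]]].
apply/eqP => yx; move: E pq; rewrite yx => /set2_eq [[e1 e2]|[e1 e2]]; by rewrite -e1 -e2 eqxx.
Qed.

Lemma N_sv x y : y \in Nb x -> y \in sv C.
Proof. by rewrite inE => /andP []. Qed.

Lemma edge_at x f : f \in se C -> x \in f -> exists y, y \in Nb x /\ f = [set x; y].
Proof.
move=> fC; have [p [q [pC qC pq fE]]] := edge_ends fC; subst f.
rewrite in_set2 => /orP [/eqP xp|/eqP xq]; subst x.
- by exists q; rewrite inE qC fC.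
- exists p; split; last exact: setUC.
  by rewrite inE pC /= setUC.
Qed.

Lemma degN x : deg C x <= #|Nb x|.
Proof.
apply: (leq_trans _ (leq_imset_card (fun y => [set x; y]) (Nb x))).
apply: subset_leq_card; apply/subsetP => f; rewrite inE => /andP [fC xf].
have [y [yN ->]] := edge_at fC xf; exact: imset_f.
Qed.

Lemma Ngt x : x \in sv C -> 3 <= #|Nb x|.
Proof. by move=> xC; apply: leq_trans (mdC xC) (degN x). Qed.

Lemma sees_sub x Z : sees x Z \subset Nb x.
Proof. by apply/subsetP => y; rewrite inE => /andP []. Qed.

Lemma N_seen x y : x \in sv C -> y \in Nb x ->
  exists w z, [/\ w \in branch U b x, z \in branch U b y & e w z].
Proof.
move=> xC yN; move: (yN); rewrite inE => /andP [yC /edgC [a [c [aU cU bac ac E]]]].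
rewrite seGE in ac.
case/set2_eq: E => [[e1 e2]|[e1 e2]].
- by exists a, c; rewrite !inE aU cU e1 e2 !eqxx.
- by exists c, a; rewrite !inE aU cU e1 e2 !eqxx esym.
Qed.

Lemma no_split x (X Y : {set T}) c :
  x \in sv C -> X \subset branch U b x -> Y = branch U b x :\: X -> x \in Y -> c \in X ->
  conn G X -> conn G Y -> 2 <= #|sees x X| -> 2 <= #|sees x Y| -> False.
Proof.
move=> xC sX YE xY cX cnX cnY hX hY.
have [xU bx] := labC xC.
have xX : x \notin X by move: xY; rewrite YE inE => /andP [].
have XU : forall w, w \in X -> w \in U /\ b w = x by move=> w /(subsetP sX) /inbr.
have YU : forall w, w \in Y -> [/\ w \in U, b w = x & w \notin X].
  by move=> w; rewrite YE inE => /andP [wX /inbr [wU bw]].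
have [cU bc] := XU c cX.
have cC : c \notin sv C.
  apply/negP => cC; have := (labC cC).2; rewrite bc => cx.
  by move: xX; rewrite cx cX.
have cx : c != x by apply: contraNneq xX => <-.
set NX := sees x X. set NY := sees x Y.
have NXN : forall y, y \in NX -> y \in Nb x by move=> y /(subsetP (sees_sub _ _)).
have NYN : forall y, y \in NY -> y \in Nb x by move=> y /(subsetP (sees_sub _ _)).
have Nc : forall y, y \in Nb x -> y != c.
  by move=> y /N_sv yC; apply: contraNneq cC => <-.
have notX : forall z y, z \in branch U b y -> y != x -> z \notin X.
  move=> z y /inbr [_ bz] yx; apply/negP => /XU [_ bz']; by rewrite -bz bz' eqxx in yx.
pose b' := fun w => if w \in X then c else b w.
pose E0 := [set f in se C | x \notin f].
pose EY := [set [set x; y] | y in NY].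
pose EX := [set [set c; y] | y in NX].
pose H' := SGraph (c |: sv C) (E0 :|: (EY :|: (EX :|: [set [set x; c]]))).
have M' : model G H' U b'.
  split.
  - by apply/subsetP => w _; rewrite /= inE.
  - move=> w wU; rewrite /b' /= in_setU1; case: (w \in X); first by rewrite eqxx.
    by rewrite rngC ?orbT.
  - move=> z; rewrite /= in_setU1 => /orP [/eqP ->|zC].
    + by split => //; rewrite /b' cX.
    + have [zU bz] := labC zC; split => //; rewrite /b'.
      have zX : z \notin X.
        apply/negP => zX; have [_ bzx] := XU z zX.
        by move: xX; rewrite -bzx bz zX.
      by rewrite (negbTE zX).
  - move=> z; rewrite /= in_setU1 => /orP [/eqP ->|zC].
    + have -> : branch U b' c = X.
        apply/setP => w; rewrite inE /b'; case: (boolP (w \in X)) => wX.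
        * by rewrite eqxx andbT; case: (XU w wX).
        * rewrite andbC; case: (boolP (w \in U)) => wU /=; last by rewrite andbF.
          by rewrite andbT; apply/negbTE; apply: contraNneq cC => <-; exact: rngC.
      exact: cnX.
    + case: (eqVneq z x) => [->|zx].
      * have -> : branch U b' x = Y.
          apply/setP => w; rewrite YE !inE /b'; case: (boolP (w \in X)) => wX /=.
          - by rewrite (negbTE cx) andbF.
          - by [].
        exact: cnY.
      * have -> : branch U b' z = branch U b z.
          apply/setP => w; rewrite !inE /b'; case: (boolP (w \in X)) => wX //=.
          have [wU bw] := XU w wX.
          rewrite bw (eq_sym x) (negbTE zx) andbF; apply/negbTE.
          rewrite negb_and; apply/orP; right; apply: contraNneq cC => ->; done.
        exact: connC.
  - move=> f; rewrite /= !in_setU => /orP [|/orP [|/orP [|]]].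
    + rewrite inE => /andP [/edgC [a [a' [aU a'U baa' aa' fE]]] xf].
      have ha : b a != x by apply: contraNneq xf => <-; rewrite fE set21.
      have ha' : b a' != x by apply: contraNneq xf => <-; rewrite fE set22.
      have aX : a \notin X by apply/negP => /XU [_ ba]; rewrite ba eqxx in ha.
      have a'X : a' \notin X by apply/negP => /XU [_ ba]; rewrite ba eqxx in ha'.
      by exists a, a'; rewrite /b' (negbTE aX) (negbTE a'X).
    + case/imsetP => y yNY ->.
      move: (yNY); rewrite inE => /andP [yN /exists_inP [w wY /exists_inP [z zy ewz]]].
      have [wU bw wX] := YU w wY.
      have yx := N_neq yN.
      have [zU bz] := inbr zy.
      have zX := notX z y zy yx.
      exists w, z; rewrite /b' (negbTE wX) (negbTE zX) bw bz seGE eq_sym; split => //.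
    + case/imsetP => y yNX ->.
      move: (yNX); rewrite inE => /andP [yN /exists_inP [w wX /exists_inP [z zy ewz]]].
      have [wU bw] := XU w wX.
      have yx := N_neq yN.
      have [zU bz] := inbr zy.
      have zX := notX z y zy yx.
      exists w, z; rewrite /b' wX (negbTE zX) bz seGE eq_sym Nc //; split => //.
    + rewrite inE => /eqP ->.
      have s2 : X != set0 by apply/set0Pn; exists c.
      have s3 : X != branch U b x.
        by apply/eqP => E; move: xY; rewrite YE E setDv inE.
      case: (connC xC sX s2 s3) => a [a' [aX a'Y aa']].
      rewrite -YE in a'Y; have [a'U ba' a'X] := YU a' a'Y.
      have [aU ba] := XU a aX.
      exists a', a; rewrite /b' aX (negbTE a'X) ba' eq_sym cx setUC; split => //.
have mH' : is_minor G H' := model_minor (n := #|U|) (leqnn _) (minor_refl G) M'.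
have injX : {in NX &, injective (fun y => [set c; y])}.
  by move=> y y' yN _; apply: set2_inj; apply: Nc; apply: NXN.
have injY : {in NY &, injective (fun y => [set x; y])}.
  by move=> y y' yN _; apply: set2_inj; apply: N_neq; apply: NYN.
have cEX : #|EX| = #|NX| by apply: card_in_imset.
have cEY : #|EY| = #|NY| by apply: card_in_imset.
have xcEX : [set x; c] \notin EX.
  apply/imsetP => [[y yN E]]; move/set2_eq: E => [[E _]|[E _]].
  - by rewrite E eqxx in cx.
  - by move: (N_neq (NXN y yN)); rewrite -E eqxx.
have xcEY : [set x; c] \notin EY.
  apply/imsetP => [[y yN E]]; move/set2_eq: E => [[_ E]|[E _]].
  - by move: (Nc y (NYN y yN)); rewrite -E eqxx.
  - by move: (N_neq (NYN y yN)); rewrite -E eqxx.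
have D1 : [disjoint EX & [set [set x; c]]] by rewrite disjoint_sym disjoints1.
have D2 : [disjoint EY & EX :|: [set [set x; c]]].
  apply: (disj_by (P := fun f : {set T} => c \notin f)).
  - move=> f /imsetP [y yN ->]; rewrite in_set2 negb_or cx /=.
    by rewrite eq_sym Nc // NYN.
  - move=> f; rewrite in_setU => /orP [/imsetP [y _ ->]|]; first by rewrite set21.
    by rewrite inE => /eqP ->; rewrite set22.
have D3 : [disjoint E0 & EY :|: (EX :|: [set [set x; c]])].
  apply: (disj_by (P := fun f : {set T} => (x \notin f) && (c \notin f))).
  - move=> f; rewrite inE => /andP [fC ->] /=; apply/negP => cf.
    by move: (subsetP (edge_sub fC) c cf); rewrite (negbTE cC).
  - move=> f; rewrite !in_setU => /orP [/imsetP [y _ ->]|/orP [/imsetP [y _ ->]|]].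
    + by rewrite set21.
    + by rewrite set21 andbF.
    + by rewrite inE => /eqP ->; rewrite set21.
have cardH' : #|se H'| = #|E0| + (#|NY| + (#|NX| + 1)).
  by rewrite /= card_disjU // card_disjU // card_disjU // cards1 cEX cEY.
have NXY : forall y, y \in Nb x -> (y \in NX) || (y \in NY).
  move=> y yN; have [w [z [wx zy ewz]]] := N_seen xC yN.
  case: (boolP (w \in X)) => wX.
  - by apply/orP; left; rewrite inE yN /=; apply/exists_inP; exists w => //; apply/exists_inP; exists z.
  - have wY : w \in Y by rewrite YE inE wX wx.
    by apply/orP; right; rewrite inE yN /=; apply/exists_inP; exists w => //; apply/exists_inP; exists z.
have cN : #|Nb x| <= #|NX| + #|NY|.
  apply: leq_trans (leq_card_setU NX NY).1; apply: subset_leq_card.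
  by apply/subsetP => y /NXY; rewrite in_setU.
have cC' : #|se C| <= #|E0| + #|Nb x|.
  apply: (leq_trans _ (leq_add (leqnn _) (degN x))).
  apply: leq_trans (leq_card_setU _ _).1; apply: subset_leq_card.
  by apply/subsetP => f fC; rewrite in_setU !inE fC /=; case: (x \in f).
have md' : mindeg3 H'.
  move=> v; rewrite /= in_setU1 => /orP [/eqP ->|vC].
  - rewrite /deg; apply: (leq_trans _ (subset_leq_card (A := EX :|: [set [set x; c]]) _)).
    + rewrite card_disjU // cards1 cEX addn1 ltnS; exact: hX.
    + apply/subsetP => f fE; rewrite inE; apply/andP; split.
      * by move: fE; rewrite /= !in_setU => /orP [->|->]; rewrite !orbT.
      * move: fE; rewrite in_setU => /orP [/imsetP [y _ ->]|]; first by rewrite set21.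
        by rewrite inE => /eqP ->; rewrite set22.
  - case: (eqVneq v x) => [->|vx].
    + rewrite /deg; apply: (leq_trans _ (subset_leq_card (A := EY :|: [set [set x; c]]) _)).
      * rewrite card_disjU; last by rewrite disjoint_sym disjoints1.
        by rewrite cards1 cEY addn1 ltnS.
      * apply/subsetP => f fE; rewrite inE; apply/andP; split.
        - by move: fE; rewrite /= !in_setU => /orP [->|->]; rewrite !orbT.
        - move: fE; rewrite in_setU => /orP [/imsetP [y _ ->]|]; first by rewrite set21.
          by rewrite inE => /eqP ->; rewrite set21.
    + apply: leq_trans (mdC vC) _; rewrite /deg.
      have E0v : forall f, f \in se C -> v \in f -> x \notin f -> f \in se H'.
        by move=> f fC _ xf; rewrite /= in_setU; apply/orP; left; rewrite inE fC xf.
      case: (boolP (v \in NY)) => vNY.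
      * apply: subset_leq_card; apply/subsetP => f /setIdP [fC vf]; apply/setIdP; split => //.
        case: (boolP (x \in f)) => xf; last by apply: E0v.
        have [y [yN fE]] := edge_at fC xf.
        move: vf; rewrite fE in_set2 (negbTE vx) /= => /eqP vy.
        by rewrite /= !in_setU -vy (imset_f _ vNY) orbT.
      case: (boolP (v \in Nb x)) => vN; last first.
        apply: subset_leq_card; apply/subsetP => f /setIdP [fC vf]; apply/setIdP; split => //.
        case: (boolP (x \in f)) => xf; last by apply: E0v.
        have [y [yN fE]] := edge_at fC xf.
        move: vf; rewrite fE in_set2 (negbTE vx) /= => /eqP vy.
        by rewrite vy yN in vN.
      have vNX : v \in NX by move: (NXY v vN); rewrite (negbTE vNY) orbF.
      pose E0v' := [set f in E0 | v \in f].
      apply: (leq_trans (n := #|E0v' :|: [set [set x; v]]|)).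
        apply: subset_leq_card; apply/subsetP => f /setIdP [fC vf].
        case: (boolP (x \in f)) => xf.
        - have [y [yN fE]] := edge_at fC xf.
          move: vf; rewrite fE in_set2 (negbTE vx) /= => /eqP ->.
          by rewrite in_setU set11 orbT.
        - by rewrite in_setU; apply/orP; left; apply/setIdP; split => //; apply/setIdP.
      apply: (leq_trans (leq_card_setU _ _).1).
      apply: (leq_trans (n := #|E0v' :|: [set [set c; v]]|)).
        rewrite card_disjU ?cards1 //.
        apply: (disj_by (P := fun f : {set T} => c \notin f)).
        - move=> f /setIdP [/setIdP [fC _] _]; apply/negP => cf.
          by move: (subsetP (edge_sub fC) c cf); rewrite (negbTE cC).
        - by move=> f; rewrite inE => /eqP ->; rewrite set21.
      apply: subset_leq_card; apply/subsetP => f; rewrite in_setU => /orP [|].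
      * move=> /setIdP [/setIdP [fC xf] vf]; apply/setIdP; split => //.
        by apply: E0v.
      * move=> /set1P ->; apply/setIdP; split; last by rewrite set22.
        by rewrite /= !in_setU (imset_f _ vNX) !orbT.
have := maxC mH' md'; rewrite cardH' => H1.
exact: (arith H1 cC' cN).
Qed.



Section Tree.
Variable x : T.
Hypothesis xC : x \in sv C.
Local Notation Bx := (branch U b x).
Variables (par : T -> T) (h : T -> nat).
Hypothesis parx : par x = x.
Hypothesis parP : forall w, w \in Bx -> w != x -> [/\ par w \in Bx, e w (par w) & h (par w) < h w].

Lemma xB : x \in Bx.
Proof. by have [xU bx] := labC xC; rewrite inE xU bx eqxx. Qed.

Lemma iter_in n w : w \in Bx -> iter n par w \in Bx /\ h (iter n par w) <= h w.
Proof.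
move=> wB; elim: n => [|n [iB ih]] /=; first by [].
case: (eqVneq (iter n par w) x) => [E|nx].
- by rewrite E parx; rewrite E in ih; split => //; exact: xB.
- have [pB _ hl] := parP iB nx; split => //; exact: leq_trans (ltnW hl) ih.
Qed.

Lemma fc_in w c : w \in Bx -> fconnect par w c -> c \in Bx /\ h c <= h w.
Proof. by move=> wB /iter_findex <-; apply: iter_in. Qed.

Lemma iter_x n : iter n par x = x.
Proof. by elim: n => //= n ->; rewrite parx. Qed.

Lemma fc_x c : fconnect par x c -> c = x.
Proof. by move/iter_findex <-; rewrite iter_x. Qed.

Lemma fc_step w c : fconnect par w c -> w != c -> fconnect par (par w) c.
Proof.
move=> /iter_findex E wc; move: E; case: (findex par w c) => [|k].
- by move=> /= E; rewrite E eqxx in wc.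
- by rewrite iterSr => <-; apply: fconnect_iter.
Qed.

Lemma iter_h n w : w \in Bx -> h w <= n -> iter n par w = x.
Proof.
elim: n w => [|n IH] w wB hw.
- case: (eqVneq w x) => // wx; have [_ _ hl] := parP wB wx.
  by move: hw; rewrite leqn0 => /eqP hw0; rewrite hw0 in hl.
- case: (eqVneq w x) => [->|wx]; first by rewrite iter_x.
  have [pB _ hl] := parP wB wx.
  by rewrite iterSr; apply: IH => //; rewrite -ltnS; apply: leq_trans hl hw.
Qed.

Definition Sb c := [set w in Bx | fconnect par w c].

Lemma S_sub c : Sb c \subset Bx.
Proof. by apply/subsetP => w; rewrite inE => /andP []. Qed.

Lemma S_self c : c \in Bx -> c \in Sb c.
Proof. by move=> cB; rewrite inE cB connect0. Qed.

Lemma Sx : Sb x = Bx.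
Proof.
apply/setP => w; rewrite inE; case: (boolP (w \in Bx)) => //= wB.
by rewrite -(iter_h (n := h w) wB) // fconnect_iter.
Qed.

Lemma S_conn c : c \in Bx -> conn G (Sb c).
Proof.
move=> cB; apply: (tree_conn esym eirr (r := c) (g := par) (hh := h)); first exact: S_self.
move=> w; rewrite inE => /andP [wB wc] wnc.
have wx : w != x by apply: contraNneq wnc => E; move: wc; rewrite E => /fc_x ->.
have [pB ep hl] := parP wB wx; split => //.
by rewrite inE pB fc_step.
Qed.

Lemma Y_conn c : c \in Bx -> c != x -> conn G (Bx :\: Sb c).
Proof.
move=> cB cx; apply: (tree_conn esym eirr (r := x) (g := par) (hh := h)).
  by rewrite inE xB andbT inE xB /=; apply/negP => /fc_x E; rewrite E eqxx in cx.
move=> w; rewrite inE => /andP [wS wB] wx.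
have [pB ep hl] := parP wB wx; split => //.
rewrite inE pB andbT; apply: contra wS => /setIdP [_ pc]; apply/setIdP; split => //.
exact: connect_trans (fconnect1 _ _) pc.
Qed.

Lemma child c w : w \in Sb c -> w != c ->
  exists d, [/\ d \in Bx, d != x, par d = c & w \in Sb d].
Proof.
move: {2}(h w).+1 (ltnSn (h w)) => n; elim: n w => [|n IH] w // hw.
rewrite inE => /andP [wB wc] wnc.
have wx : w != x by apply: contraNneq wnc => E; move: wc; rewrite E => /fc_x ->.
have [pB ep hl] := parP wB wx.
case: (eqVneq (par w) c) => [pc|pnc].
- by exists w; split => //; apply: S_self.
- have pS : par w \in Sb c by rewrite inE pB fc_step.
  have [d [dB dx pd pdS]] := IH (par w) (leq_trans hl hw) pS pnc.
  exists d; split => //; rewrite inE wB /=; move: pdS; rewrite inE => /andP [_].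
  exact: connect_trans (fconnect1 _ _).
Qed.

Lemma c_notin d : d \in Bx -> d != x -> par d \notin Sb d.
Proof.
move=> dB dx; have [pB _ hl] := parP dB dx.
rewrite inE pB /=; apply/negP => /(fc_in pB) [_ hd].
by move: (leq_ltn_trans hd hl); rewrite ltnn.
Qed.

Lemma S_child_sub d : d \in Bx -> Sb d \subset Sb (par d).
Proof.
move=> dB; apply/subsetP => w; rewrite !inE => /andP [wB wd]; rewrite wB /=.
exact: connect_trans wd (fconnect1 _ _).
Qed.

Lemma fc_total w a a' : fconnect par w a -> fconnect par w a' ->
  fconnect par a a' \/ fconnect par a' a.
Proof.
move=> /iter_findex Ea /iter_findex Ea'.
set m := findex par w a in Ea; set n := findex par w a' in Ea'.
case: (leqP m n) => mn.
- left; rewrite -Ea -Ea' -(subnK mn) iterD; exact: fconnect_iter.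
- right; rewrite -Ea -Ea' -(subnK (ltnW mn)) iterD; exact: fconnect_iter.
Qed.

Lemma child_disj d d' : d \in Bx -> d != x -> d' \in Bx -> d' != x ->
  par d = par d' -> d != d' -> [disjoint Sb d & Sb d'].
Proof.
move=> dB dx d'B d'x pdd' dd'.
rewrite -setI_eq0; apply/eqP/setP => w; rewrite !inE.
apply/negP => /andP [/andP [wB wd] /andP [_ wd']].
case: (fc_total wd wd') => H.
- have := fc_step H dd'; rewrite pdd' => H'.
  by move: (c_notin d'B d'x); rewrite inE H' andbT; case: (parP d'B d'x) => ->.
- have d'd : d' != d by rewrite eq_sym.
  have := fc_step H d'd; rewrite -pdd' => H'.
  by move: (c_notin dB dx); rewrite inE H' andbT; case: (parP dB dx) => ->.
Qed.

Definition goodP r (q : T -> seq T) :=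
  (forall y, y \in Nb x -> [/\ path e r (q y), uniq (r :: q y), {subset q y <= Bx} &
       exists z, z \in branch U b y /\ e (last r (q y)) z]) /\
  (forall y y', y \in Nb x -> y' \in Nb x -> y != y' -> [disjoint q y & q y']).

Lemma good_tree : exists r, r \in Bx /\ exists q, goodP r q.
Proof.
have sBN : sees x Bx = Nb x.
  apply/eqP; rewrite eqEsubset sees_sub /=; apply/subsetP => y yN.
  have [w [z [wB zy ewz]]] := N_seen xC yN.
  by rewrite inE yN /=; apply/exists_inP; exists w => //; apply/exists_inP; exists z.
have P0 : (x \in Bx) && (2 <= #|sees x (Sb x)|).
  by rewrite xB Sx sBN /=; apply: leq_trans (Ngt xC).
case: (@arg_minnP _ x (fun c => (c \in Bx) && (2 <= #|sees x (Sb c)|)) (fun c => #|Sb c|) P0).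
move=> c /andP [cB hc] cmin.
have small : forall d, d \in Bx -> d != x -> par d = c -> #|sees x (Sb d)| <= 1.
  move=> d dB dx pd; rewrite leqNgt; apply/negP => hd.
  have := cmin d; rewrite dB hd => /(_ isT); rewrite leqNgt => /negP; apply.
  apply: proper_card; apply/properP; split; first by rewrite -pd; apply: S_child_sub.
  exists c; first exact: S_self.
  by rewrite -pd; apply: c_notin.
have smallY : c != x -> #|sees x (Bx :\: Sb c)| <= 1.
  move=> cx; rewrite leqNgt; apply/negP => hY.
  apply: (no_split (X := Sb c) (Y := Bx :\: Sb c) (c := c) xC (S_sub c) erefl) => //.
  - by rewrite inE xB andbT; apply/negP => /setIdP [_ /fc_x E]; rewrite E eqxx in cx.
  - exact: S_self.
  - exact: S_conn.
  - exact: Y_conn.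
pose Props y q := [/\ path e c q, uniq (c :: q), {subset q <= Bx} &
       exists z, z \in branch U b y /\ e (last c q) z].
pose Tag y (q : seq T) := q = [::] \/
   (exists d, [/\ d \in Bx, d != x, par d = c, {subset q <= Sb d} & y \in sees x (Sb d)]) \/
   [/\ c != x, {subset q <= Bx :\: Sb c} & y \in sees x (Bx :\: Sb c)].
have ex : forall y, exists q, y \in Nb x -> Props y q /\ Tag y q.
  move=> y; case: (boolP (y \in Nb x)) => yN; last by exists [::].
  case: (boolP [exists z in branch U b y, e c z]) => [/exists_inP [z zy ecz] | nc].
    exists [::] => _; split; last by left.
    by split => //; exists z.
  have [w [z [wB zy ewz]]] := N_seen xC yN.
  have wc : w != c.
    by apply: contraNneq nc => wc; apply/exists_inP; exists z; rewrite // -wc.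
  case: (boolP (w \in Sb c)) => wS.
  - have [d [dB dx pd wd]] := child wS wc.
    have dd : d \in Sb d by apply: S_self.
    have [p [pp lp up sp]] := conn_path esym eirr (S_conn dB) dd wd.
    have sdp : {subset d :: p <= Sb d}.
      by move=> v; rewrite inE => /orP [/eqP ->|/sp].
    have [_ edc _] := parP dB dx.
    exists (d :: p) => _; split.
    + split.
      * by rewrite /= pp andbT esym -pd.
      * rewrite cons_uniq up andbT; apply/negP => /sdp; rewrite -pd; apply/negP; exact: c_notin.
      * by move=> v /sdp /(subsetP (S_sub _)).
      * by exists z; rewrite /= lp.
    + right; left; exists d; split => //.
      by rewrite inE yN /=; apply/exists_inP; exists w => //; apply/exists_inP; exists z.
  - have cx : c != x by apply: contraNneq wS => ->; rewrite Sx.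
    have [pcB ecp hl] := parP cB cx.
    have pcY : par c \in Bx :\: Sb c.
      rewrite inE pcB andbT; apply/negP => /setIdP [_ /(fc_in pcB) [_ hcc]].
      by move: (leq_ltn_trans hcc hl); rewrite ltnn.
    have wY : w \in Bx :\: Sb c by rewrite inE wS wB.
    have [p [pp lp up sp]] := conn_path esym eirr (Y_conn cB cx) pcY wY.
    have sdp : {subset par c :: p <= Bx :\: Sb c}.
      by move=> v; rewrite inE => /orP [/eqP ->|/sp].
    exists (par c :: p) => _; split.
    + split.
      * by rewrite /= pp ecp.
      * rewrite cons_uniq up andbT; apply/negP => /sdp; rewrite inE (S_self cB).
        by [].
      * by move=> v /sdp; rewrite inE => /andP [].
      * by exists z; rewrite /= lp.
    + right; right; split => //.
      by rewrite inE yN /=; apply/exists_inP; exists w => //; apply/exists_inP; exists z.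
have [q hq] := fchoice ex.
exists c; split => //; exists q; split.
  by move=> y yN; case: (hq y yN).
move=> y y' yN y'N yy'.
case: (hq y yN) => _ T1; case: (hq y' y'N) => _ T2.
case: T1 => [->|T1]; first by rewrite disjoint_has.
case: T2 => [->|T2]; first by rewrite disjoint_sym disjoint_has.
case: T1 => [[d [dB dx pd sd yd]]|[cx sY yY]]; case: T2 => [[d' [d'B d'x pd' sd' yd']]|[cx' sY' yY']].
- case: (eqVneq d d') => [E|dd'].
  + subst d'; exfalso; move: (small d dB dx pd); rewrite leqNgt => /negP; apply.
    exact: two_le yd yd' yy'.
  + apply: (disj_seq (P := mem (Sb d))) => // v /sd'.
    have pp : par d = par d' by rewrite pd pd'.
    have := child_disj dB dx d'B d'x pp dd'.
    move=> D vd'; apply/negP => vd; exact: (disjS D vd vd').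
- apply: (disj_seq (P := mem (Sb d))) => // v /sY'; rewrite inE => /andP [vS _].
  apply: contra vS; rewrite -pd => vd; exact: (subsetP (S_child_sub dB)).
- apply: (disj_seq (P := mem (Bx :\: Sb c))) => // v /sd' vd.
  rewrite inE negb_and negbK; apply/orP; left; rewrite -pd'.
  exact: (subsetP (S_child_sub d'B)).
- exfalso; move: (smallY cx); rewrite leqNgt => /negP; apply.
  exact: two_le yY yY' yy'.
Qed.

End Tree.


Lemma good_r x : x \in sv C -> exists r, r \in branch U b x /\ exists q, goodP x r q.
Proof.
move=> xC; have [par [h [parx parP]]] := conn_tree esym eirr (connC xC) (xB xC).
exact: (good_tree xC parx parP).
Qed.

Lemma core_main : is_minor G C ->
  exists H, [/\ minor3core e H, sg_iso C H & forall v, v \in sv H -> disjoint_paths_prop e H v].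
Proof.
move=> mC.
have ex : forall x, exists rq : T * (T -> seq T),
    x \in sv C -> rq.1 \in branch U b x /\ goodP x rq.1 rq.2.
  move=> x; case: (boolP (x \in sv C)) => xC; last by exists (x, fun _ => [::]).
  by have [r [rB [q gq]]] := good_r xC; exists (r, q).
have [RQ hRQ] := fchoice ex.
pose R x := (RQ x).1. pose Q x := (RQ x).2.
have hR : forall x, x \in sv C -> R x \in branch U b x /\ goodP x (R x) (Q x) by apply: hRQ.
have RU : forall x, x \in sv C -> R x \in U /\ b (R x) = x.
  by move=> x /hR [/inbr ? _].
have Rinj : {in sv C &, injective R}.
  by move=> x y xC yC E; rewrite -(RU x xC).2 E (RU y yC).2.
have imR2 : forall p q, R @: [set p; q] = [set R p; R q].
  by move=> p q; rewrite imsetU1 imset_set1.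
have imRinj : {in se C &, injective (fun F : {set T} => R @: F)}.
  move=> F F' FC F'C E; apply/setP => z.
  have gen : forall A B : {set T}, A \subset sv C -> B \subset sv C -> R @: A = R @: B ->
      z \in A -> z \in B.
    move=> A B sA sB EAB zA; have : R z \in R @: B by rewrite -EAB imset_f.
    case/imsetP => z' z'B Ez; rewrite (Rinj z z') //; first exact: (subsetP sA).
    exact: (subsetP sB).
  apply/idP/idP; first exact: gen (edge_sub FC) (edge_sub F'C) E.
  exact: gen (edge_sub F'C) (edge_sub FC) (Logic.eq_sym E).

pose H := SGraph (R @: sv C) [set R @: (F : {set T}) | F : {set T} in se C].
have MH : model G H U (fun w => R (b w)).
  split.
  - by apply/subsetP => w _; rewrite inE.
  - by move=> w wU; apply: imset_f; apply: rngC.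
  - move=> v /imsetP [x xC ->]; have [xU bx] := RU x xC; split => //.
    by rewrite bx.
  - move=> v /imsetP [x xC ->].
    have -> : branch U (fun w => R (b w)) (R x) = branch U b x.
      apply/setP => w; rewrite !inE; case: (boolP (w \in U)) => //= wU.
      apply/eqP/eqP => [E|->] //; exact: Rinj (rngC wU) xC E.
    exact: connC.
  - move=> f /imsetP [F FC ->]; have [a [c [aU cU bac ac ->]]] := edgC FC.
    exists a, c; split => //.
    apply: contra bac => /eqP E; apply/eqP; exact: Rinj (rngC aU) (rngC cU) E.
have mH : is_minor G H := model_minor (n := #|U|) (leqnn _) (minor_refl G) MH.
have cardH : #|se H| = #|se C| by apply: card_in_imset.
have degH : forall x, x \in sv C -> deg C x <= deg H (R x).
  move=> x xC; rewrite /deg.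
  rewrite -(card_in_imset (f := fun F : {set T} => R @: F) (D := [set F : {set T} in se C | x \in F])); last first.
    by move=> F F'; rewrite !inE => /andP [FC _] /andP [F'C _]; apply: imRinj.
  apply: subset_leq_card; apply/subsetP => f /imsetP [F]; rewrite inE => /andP [FC xF] ->.
  by rewrite inE imset_f //= imset_f.
have mdH : mindeg3 H.
  move=> v /imsetP [x xC ->]; exact: leq_trans (mdC xC) (degH x xC).
exists H; split.
- split => //; move=> H2 mH2 mdH2; rewrite cardH; exact: maxC.
- by exists R; split.
move=> v /imsetP [x xC ->].
have [RxB [gq gd]] := hR x xC.
have edgeH : forall u, [set R x; u] \in se H -> b u \in Nb x /\ u = R (b u).
  move=> u /imsetP [F FC E]; have [p [q [pC qC pq FE]]] := edge_ends FC.
  move: E; rewrite FE imR2 => /set2_eq [[e1 e2]|[e1 e2]].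
  - have xp := Rinj x p xC pC e1; rewrite e2 (RU q qC).2; split => //.
    by rewrite inE qC /= xp -FE.
  - have xq := Rinj x q xC qC e1; rewrite e2 (RU p pC).2; split => //.
    by rewrite inE pC /= xq setUC -FE.
have ex2 : forall u, exists tl, [set R x; u] \in se H ->
    [/\ path e (last (R x) (Q x (b u))) tl, last (last (R x) (Q x (b u))) tl = u,
        uniq tl & {subset tl <= branch U b (b u)}].
  move=> u; case: (boolP ([set R x; u] \in se H)) => uH; last by exists [::].
  have [yN uE] := edgeH u uH.
  have [_ _ _ [z [zy ez]]] := gq _ yN.
  have yC := N_sv yN.
  have [uU bu] : u \in U /\ b u = b u by split => //; rewrite uE; exact: (RU _ yC).1.
  have uy : u \in branch U b (b u) by rewrite inE uU eqxx.
  have [p [pp lp up sp]] := conn_path esym eirr (connC yC) zy uy.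
  exists (z :: p) => _; split => //=.
  - by rewrite ez pp.
  - by move=> w; rewrite inE => /orP [/eqP ->|/sp].
have [TL hTL] := fchoice ex2.
exists (fun u => Q x (b u) ++ TL u); split.
- move=> u uH; have [yN uE] := edgeH u uH.
  have [pq lq uq sq] := hTL u uH.
  have [pQ uQ sQ _] := gq _ yN.
  have yx := N_neq yN.
  split.
  + by rewrite cat_path pQ pq.
  + by rewrite last_cat lq.
  + rewrite -cat_cons cat_uniq uQ uq andbT /=; apply/hasPn => w /sq wy.
    rewrite inE negb_or; apply/andP; split.
    * apply/negP => /eqP E; move: wy; rewrite E => /inbr [_]; rewrite (RU x xC).2 => E'.
      by rewrite E' eqxx in yx.
    * apply/negP => /sQ /inbr [_ bw]; move: wy => /inbr [_]; rewrite bw => E'.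
      by rewrite E' eqxx in yx.
- move=> u u' uH u'H uu'.
  have [yN uE] := edgeH u uH; have [y'N u'E] := edgeH u' u'H.
  have yy' : b u != b u' by apply: contra uu' => /eqP E; rewrite uE u'E E.
  have [_ _ _ sT] := hTL u uH; have [_ _ _ sT'] := hTL u' u'H.
  have [_ _ sQ _] := gq _ yN; have [_ _ sQ' _] := gq _ y'N.
  have yx := N_neq yN; have y'x := N_neq y'N.
  have brd : forall w y1 y2, w \in branch U b y1 -> w \in branch U b y2 -> y1 = y2.
    by move=> w y1 y2 /inbr [_ <-] /inbr [_ <-].
  rewrite disjoint_cat; apply/andP; split; rewrite disjoint_sym disjoint_cat; apply/andP; split.
  + rewrite disjoint_sym; exact: gd.
  + apply: (disj_seq (P := mem (branch U b (b u')))) => // w /sQ wB; apply/negP => wB'.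
    by move: (brd _ _ _ wB wB') => E; rewrite E eqxx in y'x.
  + apply: (disj_seq (P := mem (branch U b x))) => // w /sT wB; apply/negP => wB'.
    by move: (brd _ _ _ wB wB') => E; rewrite E eqxx in yx.
  + apply: (disj_seq (P := mem (branch U b (b u')))) => // w /sT wB; apply/negP => wB'.
    by move: (brd _ _ _ wB wB') => E; rewrite E eqxx in yy'.
Qed.

End Core.

Unset Implicit Arguments.
Theorem lemma18 (T : finType) (e : rel T) (esym : symmetric e) (eirr : irreflexive e)
  (C : sgraph T) :
  minor3core e C ->
  exists H : sgraph T,
    [/\ minor3core e H, sg_iso C H &
        forall v, v \in sv H -> disjoint_paths_prop e H v].
Proof.
case=> mC mdC maxC.
have [U [b MC]] := minor_model esym eirr mC.
exact: (core_main esym eirr MC mdC maxC mC).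
Qed.
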